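(* Let $f: X \to Y$ be an open perfect surjection (continuous, closed, with compact fibers) onto a set star Hurewicz space $Y$. Then $X$ is nearly set star Hurewicz.
   Context: For a subset $A$ of a space $X$ and a collection $\mathcal{U}$ of subsets of $X$, ${\rm St}(A,\mathcal{U}) = \bigcup\{U \in \mathcal{U}: U \cap A \neq \emptyset\}$. A space $Y$ is set star Hurewicz if for each nonempty $B \subset Y$ and each sequence $(\mathcal{V}_n: n\in\mathbb{N})$ of collections of sets open in $Y$ with $\overline{B} \subset \bigcup\mathcal{V}_n$ for all $n$, there are finite $\mathcal{W}_n \subset \mathcal{V}_n$ such that each $y \in B$ lies in ${\rm St}(\bigcup\mathcal{W}_n,\mathcal{V}_n)$ for all but finitely many $n$. A space $X$ is nearly set star Hurewicz if for each nonempty $A \subset X$ and each sequence $(\mathcal{U}_n: n\in\mathbb{N})$ of open covers of $X$ there are finite $\mathcal{V}_n \subset \mathcal{U}_n$ such that each $x \in A$ lies in ${\rm St}(\bigcup\mathcal{V}_n,\mathcal{U}_n)$ for all but finitely many $n$. *)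

(* Defs.v *)
From HB Require Import structures.
From mathcomp Require Import all_boot all_order.
From mathcomp Require Import all_classical.
From mathcomp Require Import topology.
Set Implicit Arguments. Unset Strict Implicit. Unset Printing Implicit Defensive.
Local Open Scope classical_set_scope.

Definition St {T : Type} (A : set T) (U : set (set T)) : set T :=
  \bigcup_(V in U `&` [set V | V `&` A !=set0]) V.

Definition set_star_Hurewicz (Y : topologicalType) : Prop :=
  forall (B : set Y), B !=set0 ->
  forall (V : nat -> set (set Y)),
    (forall n, V n `<=` open) ->
    (forall n, closure B `<=` \bigcup_(W in V n) W) ->
    exists W : nat -> set (set Y),
      (forall n, W n `<=` V n /\ finite_set (W n)) /\
      (forall y, B y -> exists N, forall n, (N <= n)%N ->
          St (\bigcup_(O in W n) O) (V n) y).

Definition nearly_set_star_Hurewicz (X : topologicalType) : Prop :=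
  forall (A : set X), A !=set0 ->
  forall (U : nat -> set (set X)),
    (forall n, U n `<=` open) ->
    (forall n, \bigcup_(O in U n) O = setT) ->
    exists V : nat -> set (set X),
      (forall n, V n `<=` U n /\ finite_set (V n)) /\
      (forall x, A x -> exists N, forall n, (N <= n)%N ->
          St (\bigcup_(O in V n) O) (U n) x).

Definition open_map {X Y : topologicalType} (f : X -> Y) : Prop :=
  forall O : set X, open O -> open (f @` O).
Definition closed_map {X Y : topologicalType} (f : X -> Y) : Prop :=
  forall C : set X, closed C -> closed (f @` C).

Definition perfect_map {X Y : topologicalType} (f : X -> Y) : Prop :=
  continuous f /\ closed_map f /\ (forall y : Y, compact (f @^-1` [set y])).

(* Main.v *)
Require Import Defs.
From HB Require Import structures.
From mathcomp Require Import all_boot all_order all_classical topology.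
From mathcomp Require Import finmap.
Local Open Scope classical_set_scope.

Lemma compact_cover_gen (T : topologicalType) (a : T) (K : set T) :
  compact K -> cover_compact K.
Proof.
pose T' : ptopologicalType := HB.pack_for ptopologicalType T (isPointed.Build T a).
have E := @compact_cover T'.
move=> cK. have : @compact T' K by exact: cK.
rewrite E. exact.
Qed.

Theorem theorem3p15 (X Y : topologicalType) (f : X -> Y) :
  open_map f -> perfect_map f -> (forall y : Y, exists x : X, f x = y) ->
  set_star_Hurewicz Y -> nearly_set_star_Hurewicz X.
Proof.
move=> fopen [fcont [fclosed fcpt]] _ HY A [a Aa] U Uop Ucov.
pose fib y := f @^-1` [set y].
have step : forall n y, exists D' : {fset (set X)},
   (forall V, V \in D' -> U n V /\ V `&` fib y !=set0) /\
   fib y `<=` \bigcup_(V in [set` D']) V.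
  move=> n y.
  have := @compact_cover_gen _ a _ (fcpt y) => /(_ _ (U n `&` [set V | V `&` fib y !=set0]) id).
  case.
  - by move=> V [/Uop].
  - move=> x fx; have : [set: X] x by [].
    rewrite -(Ucov n) => -[V UV Vx]; by exists V => //; split => //; exists x.
  - move=> D' sD' cov; exists D'; split.
      move=> V /sD'. rewrite in_setE. by [].
    by move=> x /cov [V /= V' Vx]; exists V.
have /choice [D HD] : forall n, exists g : Y -> {fset (set X)}, forall y,
   (forall V, V \in g y -> U n V /\ V `&` fib y !=set0) /\
   fib y `<=` \bigcup_(V in [set` g y]) V.
  by move=> n; have [g Hg] := choice (step n); exists g.
pose O n y := \bigcup_(V in [set` D n y]) V.
pose W n y := ~` (f @` ~` O n y) `&` \bigcap_(V in [set` D n y]) f @` V.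
have Wopen : forall n y, open (W n y).
  move=> n y; rewrite openE => z Wz.
  apply: filterI.
    apply: open_nbhs_nbhs; split; last exact: Wz.1.
    rewrite openC; apply: fclosed; rewrite closedC; apply: bigcup_open.
    by move=> V VD; apply: Uop; exact: ((HD n y).1 V VD).1.
  apply: filter_bigI => V VD; apply: open_nbhs_nbhs; split; last exact: Wz.2 V VD.
  by apply: fopen; apply: Uop; exact: ((HD n y).1 V VD).1.
have yW : forall n y, W n y y.
  move=> n y; split.
    by move=> [x nOx fxy]; apply: nOx; apply: (HD n y).2.
  move=> V VD; have [x [Vx fxy]] := ((HD n y).1 V VD).2; by exists x.
have [] := HY (f @` A) _ (fun n => range (W n)).
- by exists (f a); exists a.
- by move=> n S [y _ <-]; exact: Wopen.
- by move=> n y _; exists (W n y); [exists y|exact: yW].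
move=> Wf [HWf Hst].
have /choice [ys Hys] : forall p : nat * set Y, exists y, Wf p.1 p.2 -> W p.1 y = p.2.
  move=> p; case: (pselect (Wf p.1 p.2)) => h; last by exists (f a).
  have [Wsub _] := HWf p.1; have [y _ eq] := Wsub _ h; by exists y.
exists (fun n => \bigcup_(S in Wf n) [set` D n (ys (n, S))]); split.
  move=> n; split.
    by move=> V [S _ VD]; exact: ((HD n _).1 V VD).1.
  by apply: bigcup_finite; [exact: (HWf n).2 | move=> S _; exact: finite_fset].
move=> x Ax.
have [N HN] := Hst (f x) (ex_intro2 _ _ x Ax erefl).
exists N => n Nn.
have [T [[y' _ <-] [z [Tz [S WfS Sz]]]] [Tfx1 Tfx2]] := HN n Nn.
have xO : O n y' x.
  by apply: contrapT => nx; apply: Tfx1; exists x.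
case: xO => V VD Vx.
have [x' Vx' fx'z] := Tz.2 V VD.
have eqS := Hys (n, S) WfS; rewrite /= in eqS; rewrite -eqS in Sz.
have x'O : O n (ys (n, S)) x'.
  by apply: contrapT => nx; apply: Sz.1; exists x'.
case: x'O => V2 V2D V2x'.
exists V => //; split; first exact: ((HD n y').1 V VD).1.
exists x'; split => //; exists V2 => //; exists S => //.
Qed.
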